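(* Let $C$ be a linear $[n,k,d]_q$ code with covering radius $\rho=1$. If $\mathrm{Aut}(C)$ is transitive, then $C$ is completely transitive.
   Context: Covering radius $\rho=\max_{{\bf v}\in\mathbb{F}_q^n}\min_{{\bf x}\in C}d({\bf v},{\bf x})$ (Hamming distance). A linear automorphism of $\mathbb{F}_q^n$ is ${\bf x}\mapsto{\bf x}M$ for an $n\times n$ monomial matrix $M$. $\mathrm{Aut}(C)$ is the group of linear automorphisms leaving $C$ invariant; it is transitive if it acts transitively on the weight-one vectors of $\mathbb{F}_q^n$. $\mathrm{Aut}(C)$ acts on cosets of $C$ by $\phi({\bf v}+C)=\phi({\bf v})+C$, and $C$ is completely transitive if this action has exactly $\rho+1$ orbits. *)

(* Defs.v *)
From HB Require Import structures.
From mathcomp Require Import all_boot all_order all_algebra all_field.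
Set Implicit Arguments. Unset Strict Implicit. Unset Printing Implicit Defensive.
Import GRing.Theory.
Local Open Scope ring_scope.

Section Codes.
Variables (F : finFieldType) (n : nat).

Definition hdist (u v : 'rV[F]_n) : nat := #|[set i : 'I_n | u 0 i != v 0 i]|.
Definition hwt (u : 'rV[F]_n) : nat := #|[set i : 'I_n | u 0 i != 0]|.

(* covering radius: max over v of min over codewords x of d(v,x)
   (the code is nonempty, so the min over C is attained; n is a neutral
   upper bound since all distances are <= n) *)
Definition covering_radius (C : {vspace 'rV[F]_n}) : nat :=
  \max_(v : 'rV[F]_n) \big[minn/n]_(x : 'rV[F]_n | x \in C) hdist v x.

Definition monomial (M : 'M[F]_n) : bool :=
  [forall i, #|[set j | M i j != 0]| == 1%N] &&
  [forall j, #|[set i | M i j != 0]| == 1%N].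

Definition code_set (C : {vspace 'rV[F]_n}) : {set 'rV[F]_n} :=
  [set x | x \in C].

Definition Aut (C : {vspace 'rV[F]_n}) : {set 'M[F]_n} :=
  [set M | monomial M & [set x *m M | x in code_set C] == code_set C].

Definition aut_transitive (C : {vspace 'rV[F]_n}) : Prop :=
  forall u v : 'rV[F]_n, hwt u = 1%N -> hwt v = 1%N ->
    exists2 M, M \in Aut C & u *m M = v.

Definition coset (C : {vspace 'rV[F]_n}) (v : 'rV[F]_n) : {set 'rV[F]_n} :=
  [set v + x | x in code_set C].

Definition cosets (C : {vspace 'rV[F]_n}) : {set {set 'rV[F]_n}} :=
  [set coset C v | v : 'rV[F]_n].

Definition act_set (M : 'M[F]_n) (K : {set 'rV[F]_n}) : {set 'rV[F]_n} :=
  [set y *m M | y in K].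

Definition coset_orbit (C : {vspace 'rV[F]_n}) (K : {set 'rV[F]_n})
  : {set {set 'rV[F]_n}} := [set act_set M K | M in Aut C].

Definition num_coset_orbits (C : {vspace 'rV[F]_n}) : nat :=
  #|[set coset_orbit C K | K in cosets C]|.

Definition completely_transitive (C : {vspace 'rV[F]_n}) : Prop :=
  num_coset_orbits C = (covering_radius C).+1.

End Codes.

(* Main.v *)
Require Import Defs.
From mathcomp Require Import all_boot all_order all_algebra all_field.
Set Implicit Arguments. Unset Strict Implicit. Unset Printing Implicit Defensive.
Import GRing.Theory.

Section Aux.
Variables (F : finFieldType) (n : nat).
Open Scope ring_scope.

Lemma row_single (M : 'M[F]_n) i : #|[set j | M i j != 0]| == 1%N ->
  exists j0, forall j, (M i j != 0) = (j == j0).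
Proof.
move/cards1P=> [j0 Hj]; exists j0 => j.
by have := Hj; move/setP/(_ j); rewrite !inE.
Qed.

Lemma col_single (M : 'M[F]_n) j : #|[set i | M i j != 0]| == 1%N ->
  exists i0, forall i, (M i j != 0) = (i == i0).
Proof.
move/cards1P=> [j0 Hj]; exists j0 => i.
by have := Hj; move/setP/(_ i); rewrite !inE.
Qed.

Lemma monomial_mul (M N : 'M[F]_n) : monomial M -> monomial N -> monomial (M *m N).
Proof.
move=> /andP[/forallP rM /forallP cM] /andP[/forallP rN /forallP cN].
apply/andP; split; apply/forallP.
- move=> i; have [j0 Hj0] := row_single (rM i).
  have E : forall j, (M *m N) i j = M i j0 * N j0 j.
    move=> j; rewrite mxE (bigD1 j0) //= big1 ?addr0 // => k /negbTE nk.
    by have := Hj0 k; rewrite nk => /negbFE/eqP ->; rewrite mul0r.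
  have -> : [set j | (M *m N) i j != 0] = [set j | N j0 j != 0].
    apply/setP => j; rewrite !inE E mulf_eq0 negb_or Hj0 eqxx //.
  exact: rN.
- move=> j; have [i0 Hi0] := col_single (cN j).
  have E : forall i, (M *m N) i j = M i i0 * N i0 j.
    move=> i; rewrite mxE (bigD1 i0) //= big1 ?addr0 // => k /negbTE nk.
    by have := Hi0 k; rewrite nk => /negbFE/eqP ->; rewrite mulr0.
  have -> : [set i | (M *m N) i j != 0] = [set i | M i i0 != 0].
    apply/setP => i; rewrite !inE E mulf_eq0 negb_or Hi0 eqxx andbT //.
  exact: cM.
Qed.

Lemma monomial1 : monomial (1%:M : 'M[F]_n).
Proof.
apply/andP; split; apply/forallP => i; apply/cards1P; exists i;
  apply/setP => j; rewrite !inE mxE.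
  by rewrite (eq_sym i j); case: (j == i); rewrite ?mulr1n ?mulr0n ?oner_eq0 ?eqxx.
by case: (j == i); rewrite ?mulr1n ?mulr0n ?oner_eq0 ?eqxx.
Qed.

Lemma act_set_mul (M N : 'M[F]_n) K :
  act_set (M *m N) K = act_set N (act_set M K).
Proof.
apply/setP => y; apply/imsetP/imsetP.
- by move=> [x Hx ->]; exists (x *m M); [apply/imsetP; exists x|rewrite mulmxA].
- by move=> [z /imsetP[x Hx ->] ->]; exists x; rewrite // mulmxA.
Qed.

Lemma Aut1 (C : {vspace 'rV[F]_n}) : 1%:M \in Aut C.
Proof.
rewrite inE monomial1 /=; apply/eqP/setP => y.
apply/imsetP/idP.
- by move=> [x Hx ->]; rewrite mulmx1.
- by move=> Hy; exists y; rewrite ?mulmx1.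
Qed.

Lemma Aut_mul (C : {vspace 'rV[F]_n}) M N : M \in Aut C -> N \in Aut C ->
  M *m N \in Aut C.
Proof.
rewrite !inE => /andP[mM /eqP hM] /andP[mN /eqP hN].
rewrite monomial_mul //=; apply/eqP.
by have := act_set_mul M N (code_set C); rewrite /act_set hM hN.
Qed.

Lemma act_coset (C : {vspace 'rV[F]_n}) M v : M \in Aut C ->
  act_set M (coset C v) = coset C (v *m M).
Proof.
rewrite inE => /andP[_ /eqP hM].
apply/setP => y; apply/imsetP/imsetP.
- move=> [z /imsetP[x Hx ->] ->]; exists (x *m M); last by rewrite mulmxDl.
  by rewrite -hM; apply/imsetP; exists x.
- move=> [x']; rewrite -hM => /imsetP[x Hx ->] ->.
  by exists (v + x); [apply/imsetP; exists x|rewrite mulmxDl].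
Qed.

Lemma orbit_sub (C : {vspace 'rV[F]_n}) M K : M \in Aut C ->
  coset_orbit C (act_set M K) \subset coset_orbit C K.
Proof.
move=> hM; apply/subsetP => L /imsetP[N hN ->].
by apply/imsetP; exists (M *m N); [exact: Aut_mul|rewrite act_set_mul].
Qed.

Lemma orbit_self (C : {vspace 'rV[F]_n}) K : K \in coset_orbit C K.
Proof.
apply/imsetP; exists 1%:M; first exact: Aut1.
by apply/setP => y; apply/idP/imsetP => [Hy|[x Hx ->]];
  [exists y; rewrite ?mulmx1|rewrite mulmx1].
Qed.

Lemma orbit_code (C : {vspace 'rV[F]_n}) :
  coset_orbit C (code_set C) = [set code_set C].
Proof.
apply/setP => L; rewrite inE; apply/idP/eqP.
- by move=> /imsetP[M]; rewrite inE => /andP[_ /eqP h] ->.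
- by move=> ->; apply: orbit_self.
Qed.

Lemma coset_eq (C : {vspace 'rV[F]_n}) v w : v - w \in C ->
  coset C v = coset C w.
Proof.
move=> h; apply/setP => y; apply/imsetP/imsetP => -[x]; rewrite inE => Hx ->.
- exists (v - w + x); first by rewrite inE memvD.
  by rewrite addrA (addrC w) subrK.
- exists (x - (v - w)); first by rewrite inE memvB.
  by rewrite opprB (addrC x) addrA (addrC v) subrK.
Qed.

Lemma coset_code (C : {vspace 'rV[F]_n}) v : v \in C -> coset C v = code_set C.
Proof.
move=> h; rewrite (@coset_eq C v 0) ?subr0 //.
apply/setP => y; apply/imsetP/idP => [[x Hx ->]|Hy]; first by rewrite add0r.
by exists y; rewrite ?add0r.
Qed.

Lemma hwt_hdist (v x : 'rV[F]_n) : hwt (v - x) = hdist v x.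
Proof. by apply: eq_card => i; rewrite !inE !mxE subr_eq0. Qed.

Lemma hwt0 (w : 'rV[F]_n) : hwt w = 0%N -> w = 0.
Proof.
move/eqP; rewrite cards_eq0 => /eqP h; apply/rowP => i.
by move/setP/(_ i): h; rewrite !inE mxE => /negbFE/eqP.
Qed.

Lemma hdist_le (v x : 'rV[F]_n) : (hdist v x <= n)%N.
Proof. by rewrite /hdist -[X in (_ <= X)%N]card_ord max_card. Qed.

Lemma hdist_self (v : 'rV[F]_n) : hdist v v = 0%N.
Proof. by apply/eqP; rewrite cards_eq0; apply/eqP/setP => i; rewrite !inE eqxx. Qed.

Lemma bigmin_le (P : pred 'rV[F]_n) f x : P x ->
  (\big[minn/n]_(y | P y) f y <= f x)%N.
Proof.
move=> Px; rewrite -big_filter.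
have : x \in [seq y <- index_enum 'rV[F]_n | P y] by rewrite mem_filter Px mem_index_enum.
elim: (filter _ _) => // a r IH; rewrite inE big_cons => /orP[/eqP->|/IH h].
  exact: geq_minl.
by rewrite geq_min h orbT.
Qed.

End Aux.

Theorem lemma1p5 (F : finFieldType) (n k : nat) (C : {vspace 'rV[F]_n}) :
  \dim C = k ->
  covering_radius C = 1%N ->
  aut_transitive C ->
  completely_transitive C.
Proof.
move=> _ hcr htr.
have near : forall v : 'rV[F]_n, exists2 x, x \in C & (hdist v x <= 1)%N.
  move=> v.
  have gv : (\big[minn/n]_(x : 'rV[F]_n | x \in C) hdist v x <= 1)%N.
    have := @leq_bigmax _ (fun v => \big[minn/n]_(x : 'rV[F]_n | x \in C) hdist v x) v.
    by rewrite -[X in (_ <= X)%N]/(covering_radius C) hcr.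
  case: (leqP n 1) => hn.
    by exists 0%R; rewrite ?mem0v // (leq_trans (hdist_le _ _)).
  case: (pickP (fun x => (x \in C) && (hdist v x <= 1)%N)) => [x /andP[]|none].
    by exists x.
  have : (1 < \big[minn/n]_(x : 'rV[F]_n | x \in C) hdist v x)%N.
    apply: (big_ind (fun m => 1 < m)%N) => //.
      by move=> a b ha hb; rewrite leq_min ha hb.
    by move=> x xC; have := none x; rewrite xC /= => /negbT; rewrite -ltnNge.
  by rewrite ltnNge gv.
have near_coset : forall v : 'rV[F]_n, v \notin C ->
    exists2 e, hwt e = 1%N & coset C v = coset C e.
  move=> v vC; have [x xC hx] := near v.
  exists (v - x)%R.
    rewrite -hwt_hdist in hx; apply/eqP; rewrite eqn_leq hx /= lt0n.
    apply/negP => /eqP/hwt0/eqP; rewrite subr_eq0 => /eqP ev.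
    by rewrite ev xC in vC.
  by apply: coset_eq; rewrite opprB addrC subrK.
have orbit_eq : forall e1 e2 : 'rV[F]_n, hwt e1 = 1%N -> hwt e2 = 1%N ->
    coset_orbit C (coset C e1) = coset_orbit C (coset C e2).
  move=> e1 e2 h1 h2.
  have [M hM eM] := htr e1 e2 h1 h2; have [N hN eN] := htr e2 e1 h2 h1.
  apply/eqP; rewrite eqEsubset; apply/andP; split.
  - by rewrite -{1}eN -act_coset //; exact: orbit_sub.
  - by rewrite -{1}eM -act_coset //; exact: orbit_sub.
case: (pickP (fun v => v \notin C)) => [v0 v0C|allC]; last first.
  have : (covering_radius C <= 0)%N.
    apply/bigmax_leqP => v _.
    apply: (leq_trans (@bigmin_le F n (fun y => y \in C) (hdist v) v (negbFE (allC v)))).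
    by rewrite hdist_self.
  by rewrite hcr.
have [e0 he0 ce0] := near_coset v0 v0C.
have HS : [set coset_orbit C K | K in cosets C] =
    [set coset_orbit C (code_set C); coset_orbit C (coset C e0)].
  apply/setP => L; rewrite !inE; apply/imsetP/orP.
  - move=> [K /imsetP[v _ ->] ->].
    case: (boolP (v \in C)) => vC; first by left; rewrite coset_code.
    right; have [e he ->] := near_coset v vC; by rewrite (orbit_eq _ _ he he0).
  - case=> /eqP ->.
      by exists (coset C 0%R); [apply/imsetP; exists 0%R | rewrite coset_code ?mem0v].
    by exists (coset C e0); [apply/imsetP; exists e0|].
rewrite /completely_transitive /num_coset_orbits HS cards2 hcr.
suff -> : (coset_orbit C (code_set C) != coset_orbit C (coset C e0)) by [].
apply/negP => /eqP E.
have : coset C e0 \in coset_orbit C (code_set C) by rewrite E orbit_self.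
rewrite orbit_code inE => /eqP cE.
have : v0 \in coset C v0 by apply/imsetP; exists 0%R; rewrite ?addr0 // inE mem0v.
by rewrite ce0 cE inE (negbTE v0C).
Qed.
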